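(* Let $\Lambda$ be a finite connected cubic graph admitting a group of automorphisms $G$ acting transitively on the $2$-arcs of $\Lambda$, and let $\Gamma=\mathrm{Dart}(\Lambda)$, with $G$ acting on $\Gamma$ naturally via $(u,v)\mapsto(u^g,v^g)$. Then $\Gamma$ is a tetravalent $G$-half-arc-transitive graph with $\mathrm{rad}_G(\Gamma)=3$ and $\mathrm{att}_G(\Gamma)=2$, and $\mathrm{Alt}_G(\Gamma)\cong\Lambda$. Moreover, the natural orientation of $\mathrm{Dart}(\Lambda)$ coincides with one of the two paired orientations of $\Gamma$ induced by the action of $G$.
   Context: All graphs are finite and simple. A $2$-arc is a walk $(x,y,z)$ with $x\ne z$. For a cubic graph $\Lambda$, the dart graph $\mathrm{Dart}(\Lambda)$ has as vertices the arcs (ordered pairs of adjacent vertices) of $\Lambda$, with $(u,v)$ adjacent to $(u',v')$ iff either $u'=v$ and $u\neq v'$, or $u=v'$ and $u'\neq v$; its natural orientation orients the edge $(u,v)(v,w)$ from $(u,v)$ to $(v,w)$. For a tetravalent graph $\Gamma$ and $G\le \mathrm{Aut}(\Gamma)$, $\Gamma$ is $G$-half-arc-transitive if $G$ acts transitively on vertices and edges but not on arcs; then the two $G$-orbits on arcs give two paired orientations of the edges, and each vertex is the tail of two and head of two incident edges. A $G$-alternating cycle is a cycle in which every two consecutive edges have a common head or a common tail. All have length $2\,\mathrm{rad}_G(\Gamma)$, and any two sharing a vertex meet in $\mathrm{att}_G(\Gamma)$ vertices. $\mathrm{Alt}_G(\Gamma)$ is the graph whose vertices are the $G$-alternating cycles,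 two adjacent iff they share a vertex. *)

(* Defs.v *)
From mathcomp Require Import all_boot all_fingroup.
Set Implicit Arguments. Unset Strict Implicit. Unset Printing Implicit Defensive.

Section Graphs.
Variable V : finType.
Variable E : rel V.

Definition simple_graph : Prop := symmetric E /\ irreflexive E.
Definition nbrs (x : V) : {set V} := [set y | E x y].
Definition regular (k : nat) : Prop := forall x, #|nbrs x| = k.
Definition cubic_graph : Prop := simple_graph /\ regular 3.
Definition tetravalent : Prop := simple_graph /\ regular 4.
Definition connected_graph : Prop := forall x y, connect E x y.

Variable gT : finGroupType.
Variable G : {set gT}.
Variable act : gT -> V -> V.

Definition acts_by_automorphisms : Prop :=
  forall g, g \in G -> injective (act g) /\ forall x y, E (act g x) (act g y) = E x y.

Definition vertex_transitive : Prop :=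
  forall x y, exists2 g, g \in G & act g x = y.

Definition edge_transitive : Prop :=
  forall x y x' y', E x y -> E x' y' ->
    exists2 g, g \in G &
      ((act g x = x' /\ act g y = y') \/ (act g x = y' /\ act g y = x')).

Definition arc_transitive : Prop :=
  forall x y x' y', E x y -> E x' y' ->
    exists2 g, g \in G & (act g x = x' /\ act g y = y').

Definition half_arc_transitive : Prop :=
  [/\ acts_by_automorphisms, vertex_transitive, edge_transitive & ~ arc_transitive].

(** The orientation induced by G from the arc (a,b): the G-orbit of (a,b);
    [orient a b x y] means that the edge xy is oriented from tail x to head y. *)
Definition orient (a b : V) (x y : V) : Prop :=
  E x y /\ exists2 g, g \in G & (act g a = x /\ act g b = y).

Definition is_cycle (c : seq V) : Prop := 3 <= size c /\ uniq c /\ path.cycle E c.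

Definition alternating_wrt (O : V -> V -> Prop) (c : seq V) : Prop :=
  is_cycle c /\
  forall x, x \in c ->
    (O (prev c x) x /\ O (next c x) x) \/ (O x (prev c x) /\ O x (next c x)).

Definition G_alternating (c : seq V) : Prop :=
  exists a b, E a b /\ alternating_wrt (orient a b) c.

(** A cycle, as a subgraph, is identified by its set of (oriented both ways) edges. *)
Definition cycle_edges (c : seq V) : {set V * V} :=
  [set p | (p.1 \in c) && ((p.2 == next c p.1) || (p.1 == next c p.2))].

Definition edge_verts (S : {set V * V}) : {set V} :=
  [set x | [exists y, (x, y) \in S]].

(** The vertices of Alt_G: edge sets of G-alternating cycles. *)
Definition alt_cycle (S : {set V * V}) : Prop :=
  exists2 c, G_alternating c & S = cycle_edges c.

Definition radius_is (r : nat) : Prop :=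
  forall c, G_alternating c -> size c = 2 * r.

Definition attachment_is (k : nat) : Prop :=
  forall S1 S2, alt_cycle S1 -> alt_cycle S2 -> S1 != S2 ->
    edge_verts S1 :&: edge_verts S2 != set0 ->
    #|edge_verts S1 :&: edge_verts S2| = k.

Definition alt_graph_iso (T : finType) (e : rel T) : Prop :=
  exists f : T -> {set V * V},
    [/\ injective f,
        (forall x, alt_cycle (f x)),
        (forall S, alt_cycle S -> exists x, f x = S) &
        (forall x y, e x y <-> (f x != f y /\ edge_verts (f x) :&: edge_verts (f y) != set0))].

End Graphs.

Section Dart.
Variable T : finType.
Variable e : rel T.

Definition is_automorphism (g : {perm T}) : Prop := forall x y, e (g x) (g y) = e x y.

Definition two_arc_transitive (G : {set {perm T}}) : Prop :=
  forall x y z x' y' z',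
    e x y -> e y z -> x != z -> e x' y' -> e y' z' -> x' != z' ->
    exists2 g, g \in G & [/\ g x = x', g y = y' & g z = z'].

Definition dart := {p : T * T | e p.1 p.2}.

Definition dart_rel : rel dart := fun a b =>
  (((val b).1 == (val a).2) && ((val a).1 != (val b).2)) ||
  (((val a).1 == (val b).2) && ((val b).1 != (val a).2)).

Definition dart_natural (a b : dart) : Prop :=
  (val b).1 = (val a).2 /\ (val a).1 <> (val b).2.

(** Natural action of g on darts (u,v) |-> (u^g, v^g)
    (the default branch is never used when g is an automorphism). *)
Definition dart_act (g : {perm T}) (d : dart) : dart :=
  odflt d (insub (g (val d).1, g (val d).2)).

End Dart.

(* Main.v *)
Require Import Defs.
From mathcomp Require Import all_boot all_fingroup.
From mathcomp Require Import zify.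
Set Implicit Arguments. Unset Strict Implicit. Unset Printing Implicit Defensive.

Section Basic.
Variable T : finType.
Variable e : rel T.
Hypothesis esym : symmetric e.
Hypothesis eirr : irreflexive e.
Hypothesis reg3 : forall x, #|nbrs e x| = 3.

Local Notation D := (dart e).
Definition d1 (d : D) := (val d).1.
Definition d2 (d : D) := (val d).2.
Lemma dE (d : D) : e (d1 d) (d2 d). Proof. exact: valP d. Qed.
Lemma dneq (d : D) : d1 d != d2 d.
Proof. by apply/eqP => h; have := dE d; rewrite h eirr. Qed.
Lemma dart_eq (a b : D) : (a == b) = (d1 a == d1 b) && (d2 a == d2 b).
Proof. by rewrite -val_eqE /d1 /d2; case: (val a) => ? ?; case: (val b). Qed.
Definition mk u v (h : e u v) : D := exist _ (u, v) h.
Lemma d1mk u v h : d1 (@mk u v h) = u. Proof. by []. Qed.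
Lemma d2mk u v h : d2 (@mk u v h) = v. Proof. by []. Qed.

Lemma dart_ext (a b : D) : d1 a = d1 b -> d2 a = d2 b -> a = b.
Proof. by move=> h1 h2; apply/eqP; rewrite dart_eq h1 h2 !eqxx. Qed.

Definition atv v (d : D) := (d1 d == v) || (d2 d == v).
Definition Nb (a b : D) := (d1 b == d2 a) && (d1 a != d2 b).

Lemma relN a b : dart_rel a b = Nb a b || Nb b a.
Proof. by rewrite /dart_rel /Nb /d1 /d2 eq_sym. Qed.

Lemma Nb_anti a b : Nb a b -> Nb b a -> False.
Proof. by rewrite /Nb => /andP[/eqP h1 h2] /andP[/eqP h3 _]; rewrite h3 eqxx in h2. Qed.

Lemma natE a b : dart_natural a b <-> Nb a b.
Proof.
rewrite /dart_natural /Nb /d1 /d2; split.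
  by case=> -> h; rewrite eqxx; apply/eqP.
by case/andP=> /eqP -> /eqP.
Qed.

Lemma nbr_in v x : x \in nbrs e v = e v x. Proof. by rewrite inE. Qed.

Lemma three_other v a b : exists c, [/\ e v c, c != a & c != b].
Proof.
have h1 := cardsD1 a (nbrs e v). have h2 := cardsD1 b (nbrs e v :\ a).
have : 0 < #|nbrs e v :\ a :\ b|.
  move: h1 h2; rewrite reg3; case: (a \in _); case: (b \in _) => /= h1 h2; lia.
case/card_gt0P => c; rewrite !inE => /and3P[cb ca cv].
by exists c.
Qed.

Lemma two_only v a x y z : e v a -> e v x -> e v y -> e v z ->
  x != a -> y != a -> z != a -> x != y -> z = x \/ z = y.
Proof.
move=> ha hx hy hz xa ya za xy.
case: (eqVneq z x) => [->|zx]; first by left.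
case: (eqVneq z y) => [->|zy]; first by right.
exfalso.
have h1 := cardsD1 a (nbrs e v).
have h2 := cardsD1 x (nbrs e v :\ a).
have h3 := cardsD1 y (nbrs e v :\ a :\ x).
have h4 := cardsD1 z (nbrs e v :\ a :\ x :\ y).
move: h1 h2 h3 h4; rewrite reg3 !inE ha hx hy hz xa ya za.
rewrite [y == x]eq_sym xy zx zy /=.
lia.
Qed.

Lemma mid v a b : dart_rel a b -> atv v a -> atv v b ->
  (Nb a b /\ d2 a = v) \/ (Nb b a /\ d2 b = v).
Proof.
rewrite relN /atv /Nb => /orP[] /andP[/eqP e1 n1] /orP[/eqP h1|/eqP h1] /orP[/eqP h2|/eqP h2].
all: try (left; split; [by rewrite e1 eqxx| by []]).
all: try (right; split; [by rewrite e1 eqxx n1| by []]).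
all: try (by left; rewrite e1 eqxx n1; split; [|congruence]).
all: try (by right; rewrite e1 eqxx n1; split; [|congruence]).
all: by move: n1; rewrite h1 h2 eqxx.
Qed.

Lemma nbr_at v x y : dart_rel x y -> atv v x -> atv v y ->
 (d1 x = v /\ d2 y = v /\ d1 y != d2 x) \/ (d2 x = v /\ d1 y = v /\ d2 y != d1 x).
Proof.
move=> r ax ay; case: (mid r ax ay) => [][] /andP[/eqP h1 h2] h3.
  by right; rewrite h1 h3 eq_sym.
by left; rewrite h1 h3.
Qed.

Lemma nbr_at1 v x y : d1 x = v -> dart_rel x y -> atv v y -> d2 y = v /\ d1 y != d2 x.
Proof.
move=> hx r ay; have ax : atv v x by rewrite /atv hx eqxx.
case: (nbr_at r ax ay) => [[_ h]|[hx' _]] //.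
by have := dneq x; rewrite hx hx' eqxx.
Qed.
Lemma nbr_at2 v x y : d2 x = v -> dart_rel x y -> atv v y -> d1 y = v /\ d2 y != d1 x.
Proof.
move=> hx r ay; have ax : atv v x by rewrite /atv hx eqxx orbT.
case: (nbr_at r ax ay) => [[hx' _]|[_ h]] //.
by have := dneq x; rewrite hx hx' eqxx.
Qed.

Lemma two_nbr v x y z t : atv v x -> atv v y -> atv v z -> atv v t ->
  dart_rel x y -> dart_rel x z -> dart_rel x t -> y != z -> t = y \/ t = z.
Proof.
move=> ax ay az at_ rxy rxz rxt yz.
case/orP: ax => /eqP hx.
- case: (nbr_at1 hx rxy ay) => hy ny; case: (nbr_at1 hx rxz az) => hz nz;
  case: (nbr_at1 hx rxt at_) => ht nt.
  have yz' : d1 y != d1 z by move: yz; rewrite dart_eq; apply: contra => /eqP h; rewrite h hy hz !eqxx.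
  have ev : forall w : D, d2 w = v -> e v (d1 w) by move=> w hw; rewrite esym -hw dE.
  have := dE x; rewrite hx => exv.
  case: (two_only exv (ev _ hy) (ev _ hz) (ev _ ht) ny nz nt yz') => h; [left|right];
    apply: dart_ext => //; congruence.
- case: (nbr_at2 hx rxy ay) => hy ny; case: (nbr_at2 hx rxz az) => hz nz;
  case: (nbr_at2 hx rxt at_) => ht nt.
  have yz' : d2 y != d2 z by move: yz; rewrite dart_eq; apply: contra => /eqP h; rewrite h hy hz !eqxx.
  have ev : forall w : D, d1 w = v -> e v (d2 w) by move=> w hw; rewrite -hw dE.
  have := dE x; rewrite hx esym => exv.
  case: (two_only exv (ev _ hy) (ev _ hz) (ev _ ht) ny nz nt yz') => h; [left|right];
    apply: dart_ext => //; congruence.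
Qed.

Lemma card_out v (P : pred T) :
  #|[set d : D | (d1 d == v) && P (d2 d)]| = #|[set w in nbrs e v | P w]|.
Proof.
rewrite -(card_in_imset (f := d2)).
  apply: eq_card => w; rewrite [in RHS]inE /nbrs inE; apply/imsetP/andP.
    case=> d; rewrite inE => /andP[/eqP h1 h2] ->; split=> //; rewrite -h1; exact: dE.
  by case=> h1 h2; exists (mk h1); rewrite ?inE ?d1mk ?d2mk ?eqxx.
move=> a b; rewrite !inE => /andP[/eqP ha _] /andP[/eqP hb _] h.
by apply/eqP; rewrite dart_eq ha hb h !eqxx.
Qed.

Lemma card_in v (P : pred T) :
  #|[set d : D | (d2 d == v) && P (d1 d)]| = #|[set w in nbrs e v | P w]|.
Proof.
rewrite -(card_in_imset (f := d1)).
  apply: eq_card => w; rewrite [in RHS]inE /nbrs inE; apply/imsetP/andP.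
    case=> d; rewrite inE => /andP[/eqP h1 h2] ->; split=> //; rewrite -h1 esym; exact: dE.
  by case=> h1 h2; rewrite esym in h1; exists (mk h1); rewrite ?inE ?d1mk ?d2mk ?eqxx.
move=> a b; rewrite !inE => /andP[/eqP ha _] /andP[/eqP hb _] h.
by apply/eqP; rewrite dart_eq ha hb h !eqxx.
Qed.

Lemma card_D v : #|[set d : D | atv v d]| = 6.
Proof.
have -> : [set d | atv v d] = [set d : D | (d1 d == v) && predT (d2 d)] :|:
    [set d : D | (d2 d == v) && predT (d1 d)].
  by apply/setP => d; rewrite !inE /atv !andbT.
rewrite cardsU card_out card_in.
have -> : [set w in nbrs e v | predT w] = nbrs e v by apply/setP => w; rewrite !inE andbT.
have -> : [set d : D | (d1 d == v) && predT (d2 d)] :&: [set d : D | (d2 d == v) && predT (d1 d)] = set0.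
  apply/setP => d; rewrite !inE !andbT; apply/negbTE; apply/negP => /andP[/eqP h1 /eqP h2].
  by have := dneq d; rewrite h1 h2 eqxx.
by rewrite cards0 reg3.
Qed.

Lemma card_sub1 v a : e v a -> #|[set w in nbrs e v | w != a]| = 2.
Proof.
move=> h; have := cardsD1 a (nbrs e v); rewrite reg3.
have -> : a \in nbrs e v by rewrite /nbrs inE.
have -> : [set w in nbrs e v | w != a] = nbrs e v :\ a.
  by apply/setP => w; rewrite !inE andbC.
move=> /= H; lia.
Qed.

Lemma tetra_dart : tetravalent (dart_rel (e := e)).
Proof.
split; first split.
- by move=> a b; rewrite /dart_rel orbC.
- by move=> a; rewrite relN /Nb orbb (negbTE (dneq a)).
move=> x.
set A := [set d : D | (d1 d == d2 x) && predC1 (d1 x) (d2 d)].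
set B := [set d : D | (d2 d == d1 x) && predC1 (d2 x) (d1 d)].
have -> : nbrs (dart_rel (e:=e)) x = A :|: B.
  apply/setP => d; rewrite /nbrs /A /B !inE relN /Nb.
  by rewrite [d2 d == d1 x]eq_sym [d1 x == d2 d]eq_sym.
have cA : #|A| = 2.
  rewrite /A card_out -(card_sub1 (v := d2 x) (a := d1 x)); last by rewrite esym dE.
  by apply: eq_card => w; rewrite !inE.
have cB : #|B| = 2.
  rewrite /B card_in -(card_sub1 (v := d1 x) (a := d2 x)); last by rewrite dE.
  by apply: eq_card => w; rewrite !inE.
have AB : A :&: B = set0.
  apply/setP => d; rewrite !inE; apply/negbTE; apply/negP => /andP[/andP[_ h1] /andP[h2 _]].
  by rewrite h2 in h1.
by rewrite cardsU cA cB AB cards0.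
Qed.

Lemma act_val (g : {perm T}) (ag : is_automorphism e g) d :
  val (dart_act g d) = (g (d1 d), g (d2 d)).
Proof.
rewrite /dart_act.
have h : e (g (d1 d)) (g (d2 d)) by rewrite ag dE.
by rewrite (@insubT _ (fun p : T * T => e p.1 p.2) D (g (d1 d), g (d2 d)) h).
Qed.
Lemma d1_act g (ag : is_automorphism e g) d : d1 (dart_act g d) = g (d1 d).
Proof. by rewrite /d1 act_val. Qed.
Lemma d2_act g (ag : is_automorphism e g) d : d2 (dart_act g d) = g (d2 d).
Proof. by rewrite /d2 act_val. Qed.

Lemma next_nth' (x0 : D) s i : uniq (x0 :: s) -> i < size (x0 :: s) ->
  next (x0 :: s) (nth x0 (x0 :: s) i) = nth x0 (x0 :: s) i.+1.
Proof. by move=> u hi; rewrite next_nth mem_nth // index_uniq. Qed.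

Lemma nn_neq (c : seq D) x : uniq c -> 3 <= size c -> x \in c -> next c (next c x) != x.
Proof.
case: c => [//|x0 s] u hs hx.
rewrite -(nth_index x0 hx).
have hi : index x (x0 :: s) < size (x0 :: s) by rewrite index_mem.
move: (index x _) hi => i hi.
have e0 : nth x0 (x0 :: s) (size (x0 :: s)) = nth x0 (x0 :: s) 0 by rewrite nth_default.
case: (ltnP i.+1 (size (x0 :: s))) => h1.
  rewrite next_nth' // next_nth' //.
  case: (ltnP i.+2 (size (x0 :: s))) => h2.
    by rewrite nth_uniq //; apply/negP => /eqP; lia.
  have -> : i.+2 = size (x0 :: s) by lia.
  by rewrite e0 nth_uniq //; apply/negP => /eqP; move: hs h1 h2; lia.
rewrite next_nth' //.
have -> : i.+1 = size (x0 :: s) by lia.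
rewrite e0 next_nth' //.
rewrite nth_uniq //. apply/negP => /eqP. move: hs h1 hi. clear. lia. by apply: leq_trans hs.
Qed.

Lemma prev_neq_next (c : seq D) x : uniq c -> 3 <= size c -> x \in c -> prev c x != next c x.
Proof.
move=> u hs hx; apply/negP => /eqP h.
by have := nn_neq u hs hx; rewrite -h (next_prev u) eqxx.
Qed.

Definition altN (c : seq D) :=
  is_cycle (dart_rel (e:=e)) c /\ forall x, x \in c ->
    (Nb (prev c x) x /\ Nb (next c x) x) \/ (Nb x (prev c x) /\ Nb x (next c x)).

Lemma conn_v v (P : pred D) :
  (forall x t, P x -> atv v x -> atv v t -> dart_rel x t -> P t) ->
  (exists x, P x /\ atv v x) -> forall d, atv v d -> P d.
Proof.
move=> cl [x [px ax]].
have atv1 : forall d : D, d1 d = v -> atv v d by move=> d h; rewrite /atv h eqxx.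
have atv2 : forall d : D, d2 d = v -> atv v d by move=> d h; rewrite /atv h eqxx orbT.
have [y [py hy]] : exists y, P y /\ d2 y = v.
  case/orP: ax => /eqP hx; last by exists x.
  case: (three_other v (d2 x) (d2 x)) => s [hs ns _].
  rewrite esym in hs.
  exists (mk hs); split => //; apply: (cl x) => //; [exact: atv1|exact: atv2|].
  by rewrite relN /Nb /= orbC /d1 /d2 /= -/(d1 x) hx eqxx ns.
have B : forall t, d1 t = v -> d2 t != d1 y -> P t.
  move=> t ht nt; apply: (cl y) => //; [exact: atv2|exact: atv1|].
  by rewrite relN /Nb ht hy eqxx eq_sym nt.
have C : forall t, d1 t = v -> P t.
  move=> t ht; case: (eqVneq (d2 t) (d1 y)) => nt; last exact: B.
  case: (three_other v (d1 y) (d1 y)) => w [hw nw _].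
  have pw : P (mk hw) by apply: B.
  case: (three_other v (d1 y) w) => r [hr nr1 nr2].
  rewrite esym in hr.
  have pr : P (mk hr).
    apply: (cl (mk hw)) => //; [exact: atv1|exact: atv2|].
    by rewrite relN /Nb !d1mk !d2mk eqxx nr2 orbT.
  apply: (cl (mk hr)) => //; [exact: atv2|exact: atv1|].
  by rewrite relN /Nb ht nt d1mk d2mk eqxx nr1.
move=> d /orP[/eqP hd|/eqP hd]; first exact: C.
case: (three_other v (d1 d) (d1 d)) => w [hw nw _].
have pw : P (mk hw) by apply: C.
apply: (cl (mk hw)) => //; [exact: atv1|exact: atv2|].
by rewrite relN /Nb hd !d1mk !d2mk eqxx eq_sym nw orbT.
Qed.

Lemma rel_sym (a b : D) : dart_rel a b = dart_rel b a.
Proof. by rewrite /dart_rel orbC. Qed.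

Lemma alt_struct c : altN c -> exists v, (forall x, (x \in c) = atv v x) /\ size c = 6.
Proof.
case=> [[hs [u cy]] alt].
case: c hs u cy alt => [//|x0 s] hs u cy alt.
have step : forall v y, y \in x0 :: s -> atv v y -> atv v (next (x0 :: s) y) ->
    atv v (next (x0 :: s) (next (x0 :: s) y)).
  move=> v y hy ay az.
  have r : dart_rel y (next (x0 :: s) y) := next_cycle cy hy.
  have hz : next (x0 :: s) y \in x0 :: s by rewrite mem_next.
  have pz : prev (x0 :: s) (next (x0 :: s) y) = y := prev_next u y.
  case: (alt _ hz); rewrite pz => [][h1 h2]; case: (mid r ay az) => [][h3 h4].
  - move: h2 h3; rewrite /Nb /atv => /andP[/eqP -> _] /andP[/eqP -> _].
    by rewrite h4 eqxx orbT.
  - by case: (Nb_anti h1 h3).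
  - by case: (Nb_anti h1 h3).
  - move: h2; rewrite /Nb /atv => /andP[/eqP -> _].
    by rewrite h4 eqxx.
set v := if Nb x0 (next (x0 :: s) x0) then d2 x0 else d2 (next (x0 :: s) x0).
have a0 : atv v x0 && atv v (next (x0 :: s) x0).
  have r := next_cycle cy (mem_head x0 s); rewrite relN in r.
  rewrite /v; case: ifP => h.
    by move: h; rewrite /Nb /atv => /andP[/eqP -> _]; rewrite !eqxx !orbT.
  rewrite h /= in r.
  by move: r; rewrite /Nb /atv => /andP[/eqP -> _]; rewrite !eqxx !orbT.
have h0 : next (x0 :: s) x0 = nth x0 (x0 :: s) 1 by exact: (next_nth' (i:=0) u).
have all_ : forall i, i < size (x0 :: s) ->
    atv v (nth x0 (x0 :: s) i) && atv v (nth x0 (x0 :: s) i.+1).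
  elim => [_|i IH hi]; first by rewrite -h0.
  case/andP: (IH (ltnW hi)) => ai ai1.
  rewrite ai1 andTb.
  rewrite -(next_nth' u hi) -(next_nth' u (ltnW hi)).
  apply: step; first exact: mem_nth (ltnW hi).
    exact: ai.
  by rewrite (next_nth' u (ltnW hi)).
have inc : forall x, x \in x0 :: s -> atv v x.
  move=> x hx; rewrite -(nth_index x0 hx).
  have hi : index x (x0 :: s) < size (x0 :: s) by rewrite index_mem.
  by case/andP: (all_ _ hi).
have sup : forall d, atv v d -> d \in x0 :: s.
  apply: (conn_v (P := fun d => d \in x0 :: s)); last first.
    by exists x0; rewrite mem_head; split => //; case/andP: a0.
  move=> x t hx ax at_ rxt.
  have rp : dart_rel x (prev (x0 :: s) x) by rewrite rel_sym; exact: prev_cycle cy hx.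
  have rn : dart_rel x (next (x0 :: s) x) by exact: next_cycle cy hx.
  have ip : prev (x0 :: s) x \in x0 :: s by rewrite mem_prev.
  have inx : next (x0 :: s) x \in x0 :: s by rewrite mem_next.
  case: (two_nbr ax (inc _ ip) (inc _ inx) at_ rp rn rxt (prev_neq_next u hs hx)) => ->.
    exact: ip.
  exact: inx.
exists v; split.
  by move=> x; apply/idP/idP; [exact: inc|exact: sup].
have := card_D v; move/card_uniqP: u => <- <-.
by apply: eq_card => d; rewrite inE; apply/idP/idP; [exact: inc|exact: sup].
Qed.

Definition Ev v : {set D * D} := [set p | [&& dart_rel p.1 p.2, atv v p.1 & atv v p.2]].

Lemma edges_struct c v : is_cycle (dart_rel (e:=e)) c -> (forall x, (x \in c) = atv v x) ->
  cycle_edges c = Ev v.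
Proof.
case=> hs [u cy] hc; apply/setP => [[a b]]; rewrite !inE /=.
apply/idP/idP.
- case/andP => ha /orP[/eqP hb| /eqP hb].
    have r := next_cycle cy ha; rewrite -hb in r.
    by rewrite r -!hc ha hb mem_next ha.
  have hbin : b \in c.
    case: (boolP (b \in c)) => // nb; move: ha; rewrite hb next_nth (negbTE nb).
    by move=> h; rewrite h in nb.
  have r := next_cycle cy hbin; rewrite -hb rel_sym in r.
  by rewrite r -!hc ha hbin.
- case/and3P => r aa ab.
  have ha : a \in c by rewrite hc.
  have hb : b \in c by rewrite hc.
  rewrite ha /=.
  have rp : dart_rel a (prev c a) by rewrite rel_sym; exact: prev_cycle cy ha.
  have rn : dart_rel a (next c a) by exact: next_cycle cy ha.
  have ip : prev c a \in c by rewrite mem_prev.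
  have inx : next c a \in c by rewrite mem_next.
  have ap : atv v (prev c a) by rewrite -hc.
  have an : atv v (next c a) by rewrite -hc.
  case: (two_nbr aa ap an ab rp rn r (prev_neq_next u hs ha)) => ->.
    by rewrite (next_prev u) eqxx orbT.
  by rewrite eqxx.
Qed.

Lemma auto_alt c v : is_cycle (dart_rel (e:=e)) c -> (forall x, x \in c -> atv v x) -> altN c.
Proof.
move=> hc hv; split => // x hx.
case: hc => hs [u cy].
have rp : dart_rel x (prev c x) by rewrite rel_sym; exact: prev_cycle cy hx.
have rn : dart_rel x (next c x) by exact: next_cycle cy hx.
have ap : atv v (prev c x) by apply: hv; rewrite mem_prev.
have an : atv v (next c x) by apply: hv; rewrite mem_next.
case/orP: (hv x hx) => /eqP h.
- left; case: (nbr_at1 h rp ap) => h1 h2; case: (nbr_at1 h rn an) => h3 h4.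
  by rewrite /Nb h h1 h3 !eqxx h2 h4.
- right; case: (nbr_at2 h rp ap) => h1 h2; case: (nbr_at2 h rn an) => h3 h4.
  by rewrite /Nb h h1 h3 !eqxx eq_sym h2 eq_sym h4.
Qed.

Lemma cyc_exists v : exists c, altN c /\ (forall x, (x \in c) = atv v x).
Proof.
case: (three_other v v v) => w1 [h1 n1 _].
case: (three_other v w1 w1) => w2 [h2 n2 _].
case: (three_other v w1 w2) => w3 [h3 n31 n32].
have h1' : e w1 v by rewrite esym.
have h2' : e w2 v by rewrite esym.
have h3' : e w3 v by rewrite esym.
set c := [:: mk h1'; mk h2; mk h3'; mk h1; mk h2'; mk h3].
have nv : forall w, e v w -> (w == v) = false /\ (v == w) = false.
  move=> w hw; split; apply/negbTE/negP => /eqP h; by move: hw; rewrite h eirr.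
case: (nv _ h1) => a1 b1; case: (nv _ h2) => a2 b2; case: (nv _ h3) => a3 b3.
have [c21 c12] : (w2 == w1) = false /\ (w1 == w2) = false by rewrite (negbTE n2) eq_sym (negbTE n2).
have [c31 c13] : (w3 == w1) = false /\ (w1 == w3) = false by rewrite (negbTE n31) eq_sym (negbTE n31).
have [c32 c23] : (w3 == w2) = false /\ (w2 == w3) = false by rewrite (negbTE n32) eq_sym (negbTE n32).
have cyc : is_cycle (dart_rel (e:=e)) c.
  split; first by [].
  split.
    by rewrite /c /= !inE !dart_eq !d1mk !d2mk ?a1 ?b1 ?a2 ?b2 ?a3 ?b3 ?c21 ?c12 ?c31 ?c13 ?c32 ?c23 ?eqxx.
  by rewrite /c /= !relN /Nb !d1mk !d2mk ?a1 ?b1 ?a2 ?b2 ?a3 ?b3 ?c21 ?c12 ?c31 ?c13 ?c32 ?c23 ?eqxx.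
have allv : forall x, x \in c -> atv v x.
  by move=> x; rewrite /c !inE => /orP[/eqP->|/orP[/eqP->|/orP[/eqP->|/orP[/eqP->|/orP[/eqP->|/eqP->]]]]]; rewrite /atv !d1mk !d2mk eqxx ?orbT.
have al := auto_alt cyc allv.
exists c; split => //.
case: (alt_struct al) => v' [hv' _].
suff -> : v = v' by [].
have i1 : mk h1' \in c by rewrite /c !inE eqxx.
have i2 : mk h2 \in c by rewrite /c !inE eqxx ?orbT.
rewrite hv' /atv !d1mk !d2mk in i1; rewrite hv' /atv !d1mk !d2mk in i2.
case: (eqVneq v v') => // nvv.
move: i1 i2; rewrite (negbTE nvv) orbF /= => /eqP e1 /eqP e2.
by move: n2; rewrite e1 e2 eqxx.
Qed.

Variable G : {group {perm T}}.
Hypothesis autG : forall g, g \in G -> is_automorphism e g.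
Hypothesis tat : two_arc_transitive e G.

Local Notation act := (@dart_act T e).

Lemma arcN a b a' b' : Nb a b -> Nb a' b' ->
  exists2 g, g \in G & act g a = a' /\ act g b = b'.
Proof.
move=> /andP[/eqP hb nab] /andP[/eqP hb' nab'].
have e1 := dE a. have e2 : e (d2 a) (d2 b) by rewrite -hb dE.
have e1' := dE a'. have e2' : e (d2 a') (d2 b') by rewrite -hb' dE.
case: (tat e1 e2 nab e1' e2' nab') => g gG [g1 g2 g3].
have ag := autG gG.
exists g => //; split; apply: dart_ext; rewrite ?(d1_act ag) ?(d2_act ag) //.
by rewrite hb hb'.
Qed.

Lemma Nb_act g a b : g \in G -> Nb a b -> Nb (act g a) (act g b).
Proof.
move=> gG /andP[/eqP hb nab]; have ag := autG gG.
by rewrite /Nb !(d1_act ag) !(d2_act ag) hb eqxx (inj_eq perm_inj) nab.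
Qed.

Lemma orient_nat a b : Nb a b -> forall x y,
  orient (dart_rel (e:=e)) G act a b x y <-> Nb x y.
Proof.
move=> h x y; split.
  by case=> _ [g gG [<- <-]]; exact: Nb_act.
move=> h'; split; first by rewrite relN h'.
exact: arcN.
Qed.

Lemma orient_rev a b : Nb b a -> forall x y,
  orient (dart_rel (e:=e)) G act a b x y <-> Nb y x.
Proof.
move=> h x y; split.
  by case=> _ [g gG [<- <-]]; exact: Nb_act.
move=> h'; split; first by rewrite relN h' orbT.
by case: (arcN h h') => g gG [h1 h2]; exists g.
Qed.

Lemma nat_pair : 0 < #|T| -> exists a b, Nb a b.
Proof.
case/card_gt0P => u _.
case: (three_other u u u) => v [huv _ _].
case: (three_other v u u) => w [hvw nwu _].
exists (mk huv), (mk hvw).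
by rewrite /Nb !d1mk !d2mk eqxx eq_sym nwu.
Qed.

Lemma galt_iff (hT : 0 < #|T|) c :
  G_alternating (dart_rel (e:=e)) G act c <-> altN c.
Proof.
split.
  case=> a [b [r [cyc alt]]]; split => // x hx.
  rewrite relN in r; case/orP: r => h.
    case: (alt x hx) => [[p n]|[p n]]; [left|right];
      by split; [move/(orient_nat h): p|move/(orient_nat h): n].
  case: (alt x hx) => [[p n]|[p n]]; [right|left];
    by split; [move/(orient_rev h): p|move/(orient_rev h): n].
move=> hc; case: (nat_pair hT) => a [b h]; exists a, b; split; first by rewrite relN h.
split; first by case: hc.
move=> x hx; case: hc => _ alt; case: (alt x hx) => [[p n]|[p n]]; [left|right];
  by split; apply/(orient_nat h).
Qed.

Lemma alt_cycle_iff (hT : 0 < #|T|) S :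
  alt_cycle (dart_rel (e:=e)) G act S <-> exists v, S = Ev v.
Proof.
split.
  case=> c /(galt_iff hT) hc ->.
  case: (alt_struct hc) => v [hv _]; exists v.
  by apply: edges_struct => //; case: hc.
case=> v ->; case: (cyc_exists v) => c [al hm].
exists c; first by apply/(galt_iff hT).
by rewrite (edges_struct al.1 hm).
Qed.

Lemma ev_Ev v : edge_verts (Ev v) = [set d | atv v d].
Proof.
apply/setP => x; rewrite !inE; apply/existsP/idP.
  by case=> y; rewrite inE /= => /and3P[].
move=> ax; case: (cyc_exists v) => c [[[hs [u cy]] _] hm].
have hx : x \in c by rewrite hm.
exists (next c x); rewrite inE /= (next_cycle cy hx) ax -hm mem_next hx.
by [].
Qed.

Lemma both_at x y d : atv x d -> atv y d -> x != y ->
  (d1 d = x /\ d2 d = y) \/ (d1 d = y /\ d2 d = x).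
Proof.
move=> /orP[/eqP h1|/eqP h1] /orP[/eqP h2|/eqP h2] nxy.
- by move: nxy; rewrite -h1 -h2 eqxx.
- by left.
- by right.
- by move: nxy; rewrite -h1 -h2 eqxx.
Qed.

Lemma Ev_inj : injective Ev.
Proof.
move=> x y h.
have h' : [set d | atv x d] = [set d | atv y d] by rewrite -!ev_Ev h.
case: (three_other x x x) => w1 [h1 _ _].
case: (three_other x w1 w1) => w2 [h2 n2 _].
have i1 : mk h1 \in [set d | atv y d] by rewrite -h' inE /atv d1mk eqxx.
have i2 : mk h2 \in [set d | atv y d] by rewrite -h' inE /atv d1mk eqxx.
move: i1 i2; rewrite !inE /atv !d1mk !d2mk.
case: (eqVneq x y) => // nxy /= /eqP e1 /eqP e2.
by move: n2; rewrite e1 e2 eqxx.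
Qed.

End Basic.

Theorem proposition2p2 (T : finType) (e : rel T) (G : {group {perm T}}) :
  0 < #|T| ->
  cubic_graph e -> connected_graph e ->
  (forall g, g \in G -> is_automorphism e g) ->
  two_arc_transitive e G ->
  [/\ tetravalent (dart_rel (e := e)),
      half_arc_transitive (dart_rel (e := e)) G (@dart_act T e),
      radius_is (dart_rel (e := e)) G (@dart_act T e) 3,
      attachment_is (dart_rel (e := e)) G (@dart_act T e) 2 &
      (
      alt_graph_iso (dart_rel (e := e)) G (@dart_act T e) e /\
      exists a b : dart e, dart_rel a b /\
        forall x y : dart e,
          dart_natural x y <-> orient (dart_rel (e := e)) G (@dart_act T e) a b x y)].
Proof.
move=> hT [[esym eirr] reg3] _ autG tat.
have arc := arcN autG tat.
have Nact := Nb_act autG.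
have oN := orient_nat autG tat.
have gal := galt_iff reg3 autG tat hT.
have aci := alt_cycle_iff esym eirr reg3 autG tat hT.
have evE := ev_Ev esym eirr reg3.
have Einj := Ev_inj esym eirr reg3.
have oth := three_other reg3.
case: (nat_pair reg3 hT) => a0 [b0 hab0].
have both2 : forall x y, x != y -> [set d : dart e | atv x d] :&: [set d | atv y d] != set0 ->
    exists h : e x y, exists h' : e y x, [set d : dart e | atv x d] :&: [set d | atv y d] = [set mk h; mk h'].
  move=> x y nxy /set0Pn [d]; rewrite !inE => /andP[ax ay].
  have hxy : e x y.
    case: (both_at ax ay nxy) => [[<- <-]|[<- <-]]; first exact: dE.
    by rewrite esym dE.
  have hyx : e y x by rewrite esym.
  exists hxy, hyx; apply/setP => d'; rewrite !inE !dart_eq !d1mk !d2mk.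
  apply/andP/idP.
    by case=> [ax' ay']; case: (both_at ax' ay' nxy) => [[-> ->]|[-> ->]]; rewrite !eqxx ?orbT.
  by case/orP => /andP[/eqP h1 /eqP h2]; rewrite /atv h1 h2 !eqxx ?orbT.
split.
- exact: tetra_dart.
- split.
  + move=> g gG; have ag := autG _ gG; split.
      move=> a b h; apply: dart_ext; apply: (@perm_inj _ g);
        by rewrite -?(d1_act ag) -?(d2_act ag) h.
    by move=> x y; rewrite !relN /Nb !(d1_act ag) !(d2_act ag) !(inj_eq perm_inj).
  + move=> x y.
    case: (oth (d2 x) (d1 x) (d1 x)) => w [hw nw _].
    case: (oth (d2 y) (d1 y) (d1 y)) => w' [hw' nw' _].
    have n1 : Nb x (mk hw) by rewrite /Nb d1mk d2mk eqxx eq_sym nw.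
    have n2 : Nb y (mk hw') by rewrite /Nb d1mk d2mk eqxx eq_sym nw'.
    by case: (arc _ _ _ _ n1 n2) => g gG [h _]; exists g.
  + move=> x y x' y'; rewrite !relN => /orP[h|h] /orP[h'|h'].
    * by case: (arc _ _ _ _ h h') => g gG [h1 h2]; exists g => //; left.
    * by case: (arc _ _ _ _ h h') => g gG [h1 h2]; exists g => //; right.
    * by case: (arc _ _ _ _ h h') => g gG [h1 h2]; exists g => //; right.
    * by case: (arc _ _ _ _ h h') => g gG [h1 h2]; exists g => //; left.
  + move=> H.
    have r1 : dart_rel a0 b0 by rewrite relN hab0.
    have r2 : dart_rel b0 a0 by rewrite relN hab0 orbT.
    case: (H _ _ _ _ r1 r2) => g gG [h1 h2].
    by have := Nact _ _ _ gG hab0; rewrite h1 h2 => /(Nb_anti hab0).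
- move=> c /gal hc; case: (alt_struct esym eirr reg3 hc) => v [_ ->]; by [].
- move=> S1 S2 /aci [x ->] /aci [y ->] nS.
  have nxy : x != y by apply: contraNneq nS => ->.
  rewrite !evE => /(both2 _ _ nxy) [h [h' ->]].
  by rewrite cards2 dart_eq !d1mk !d2mk (negbTE nxy).
split.
  exists (Ev e); split.
  - exact: Einj.
  - by move=> x; apply/aci; exists x.
  - by move=> S /aci [x ->]; exists x.
  - move=> x y; rewrite !evE; split.
      move=> hxy; have nxy : x != y by apply: contraTneq hxy => ->; rewrite eirr.
      split; first by apply: contraNneq nxy => /Einj ->.
      by apply/set0Pn; exists (mk hxy); rewrite !inE /atv d1mk d2mk !eqxx ?orbT.
    case=> nE /set0Pn [d]; rewrite !inE => /andP[ax ay].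
    have nxy : x != y by apply: contraNneq nE => ->.
    case: (both_at ax ay nxy) => [[<- <-]|[<- <-]]; first exact: dE.
    by rewrite esym dE.
exists a0, b0; split; first by rewrite relN hab0.
by move=> x y; apply: iff_trans (natE x y) _; apply: iff_sym; exact: oN.
Qed.
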